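(* Let $c\in(0,1)$ and let $\sigma>0$ satisfy $C_{\mathrm{BS}}(\sigma)=c$. Let $$U_{23}(c)=H\!\left(\min\left(\frac{1+c}{2},\; c+e^k\,\Phi(-\sqrt{2k})\right)\right)\quad\text{and}\quad L_{U23}(c)=d_1^{-1}\!\left(\Phi^{-1}\!\left(\frac{c}{C_{\mathcal D}(U_{23}(c))}\right)\right).$$ Then $L_{U23}(c)\le\sigma$.
   Context: Fix $k\ge 0$. Let $\Phi$ and $\phi$ denote the standard normal distribution function and density. For $\sigma>0$ put $d_1(\sigma)=-k/\sigma+\sigma/2$, $d_2(\sigma)=-k/\sigma-\sigma/2$, and $C_{\mathrm{BS}}(\sigma)=\Phi(d_1(\sigma))-e^k\,\Phi(d_2(\sigma))$, a strictly increasing bijection from $(0,\infty)$ onto $(0,1)$; for $c\in(0,1)$ the implied volatility is the unique $\sigma>0$ with $C_{\mathrm{BS}}(\sigma)=c$. For $c<\mathcal D<1$ define $H(\mathcal D)=\Phi^{-1}(\mathcal D)-\Phi^{-1}\!\left(\frac{\mathcal D-c}{e^k}\right)$. The price-to-delta ratio is $C_{\mathcal D}(y)=C_{\mathrm{BS}}(y)/\Phi(d_1(y))$. The function $d_1^{-1}(x)=x+\sqrt{x^2+2k}$ (which equals $2\max(x,0)$ when $k=0$) is the inverse of $d_1$. *)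

(* Defs.v *)
From Stdlib Require Import Reals ClassicalEpsilon.
From Coquelicot Require Import Coquelicot.
Open Scope R_scope.

Definition phi (x : R) : R := exp (- x ^ 2 / 2) / sqrt (2 * PI).

(* standard normal distribution function:
   Phi x = int_{-oo}^x phi = 1/2 + int_0^x phi (phi is even, total mass 1) *)
Definition Phi (x : R) : R := / 2 + RInt phi 0 x.

(* inverse of Phi: for p in (0,1) the unique x with Phi x = p
   (Phi is a strictly increasing bijection R -> (0,1)). *)
Definition Phi_inv (p : R) : R :=
  epsilon (inhabits 0) (fun x => Phi x = p).

Definition d1 (k sigma : R) : R := - k / sigma + sigma / 2.
Definition d2 (k sigma : R) : R := - k / sigma - sigma / 2.

Definition C_BS (k sigma : R) : R :=
  Phi (d1 k sigma) - exp k * Phi (d2 k sigma).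

Definition H (k c D : R) : R := Phi_inv D - Phi_inv ((D - c) / exp k).

Definition C_D (k y : R) : R := C_BS k y / Phi (d1 k y).

(* inverse of d1 *)
Definition d1_inv (k x : R) : R := x + sqrt (x ^ 2 + 2 * k).

Definition U23 (k c : R) : R :=
  H k c (Rmin ((1 + c) / 2) (c + exp k * Phi (- sqrt (2 * k)))).

Definition L_U23 (k c : R) : R :=
  d1_inv k (Phi_inv (c / C_D k (U23 k c))).

(* Main.v *)
Require Import Defs.
From Stdlib Require Import Reals Lra Psatz ClassicalEpsilon.
From Coquelicot Require Import Coquelicot.
Import Defs.
Open Scope R_scope.

Definition gf (t : R) : R := exp (- t ^ 2).

Lemma gf_cont : forall y, continuous gf y.
Proof.
intros y. apply (ex_derive_continuous gf). unfold gf. auto_derive. easy.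
Qed.

Lemma gf_exRInt : forall a b, ex_RInt gf a b.
Proof. intros a b. apply (ex_RInt_continuous gf). intros; apply gf_cont. Qed.

Lemma gf_dpl : forall y, derivable_pt_lim (fun y => RInt gf 0 y) y (gf y).
Proof.
intros y. apply is_derive_Reals. apply (is_derive_RInt gf (fun y => RInt gf 0 y) 0).
- apply filter_forall. intros b. apply (RInt_correct gf), gf_exRInt.
- apply gf_cont.
Qed.

Definition gf_sq_lim_stmt := forall eps, 0 < eps -> exists M, 0 < M /\
  forall x, M < x -> Rabs (RInt gf 0 x ^ 2 - PI / 4) < eps.

Module Bridge.
From HB Require Import structures.
From mathcomp Require Import all_boot all_order all_algebra.
From mathcomp Require Import all_classical all_reals all_analysis.
From mathcomp Require Import Rstruct Rstruct_topology.
Import Order.TTheory GRing.Theory Num.Theory.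
Import numFieldNormedType.Exports.
Local Open Scope classical_set_scope.
Local Open Scope ring_scope.
Lemma RcosE (x : R) : Rtrigo_def.cos x = cos x.
Proof.
rewrite [Rtrigo_def.cos x]/Rtrigo_def.cos; case: exist_cos => y.
rewrite /cos_in /Pser /infinite_sum /= => cos_ub.
have H : series (cos_coeff' x) @ \oo --> y.
{ apply/cvgrPdist_lt => /= e /RltP /cos_ub[N Nub].
near=> n.
have nN : (n.-1 >= N)%coq_nat.
  apply/ssrnat.leP; near: n; exists N.+1 => //= m /= Hm.
  by rewrite -ltnS prednK // (leq_ltn_trans _ Hm).
move: Nub => /(_ _ nN) /[!RdistE] /RltP /=.
rewrite distrC sum_f_R0E.
have n0 : (0 < n)%N by near: n; exists 1%N.
rewrite prednK //.
congr (`| _ - _ | < e).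
apply: eq_bigr=> k _; rewrite /cos_coeff' /cos_n RdivE RpowE INRE factE /Rsqr RmultE.
change (Rmult x x) with (x ^+ 2); rewrite RpowE -exprM.
have -> : (2 * k)%coq_nat = k.*2 by rewrite -mul2n.
have -> : ((-1)%coqR : R) = -1 by [].
by rewrite mulrAC -mul2n.
Unshelve. all: by end_near. }
rewrite -(cvg_lim _ H) //. by rewrite (cvg_lim _ (@cvg_cos_coeff' R x)).
Qed.

Lemma two : (2%coqR : R) = 2. Proof. by []. Qed.
Lemma RpiE : PI = pi.
Proof.
have h0 : (0 <= PI/2 /\ PI/2 <= 2)%coqR.
  have := PI2_3_2; have := PI_4. lra.
have h1 : (0 <= PI / 2 <= 2)%R.
  by case: h0 => /RleP a /RleP b; apply/andP; split.
have h2 : cos (PI / 2) = 0 by rewrite -RcosE cos_PI2.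
have := cos_02_uniq h1 h2 (pihalf_02_cos_pihalf _).1 (pihalf_02_cos_pihalf _).2.
move=> e. by have := f_equal (fun t => t * 2) e; rewrite /= !divfK.
Qed.
Lemma dpl_cvg (f : R -> R) x l : derivable_pt_lim f x l ->
  (fun h : R => h^-1 * (f (h + x) - f x)) @ (0:R)^' --> l.
Proof.
move=> D. apply/(@cvgrPdist_lt _ R^o) => e /RltP e0.
have [[d d0] Hd] := D e e0.
near=> h.
have hn : h != 0 by near: h; exact: nbhs_dnbhs_neq.
have hd : `|h| < d.
  near: h; apply: (@dnbhs0_lt _ R^o); exact/RltP.
move/eqP: hn => hn. have := Hd h hn (elimT RltP hd).
rewrite distrC /= RabsE => /RltP; congr (`| _ | < _).
rewrite [h + x]addrC; congr (_ - _); exact: mulrC.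
Unshelve. all: by end_near.
Qed.

Lemma dpl_mc (f : R -> R) x l : derivable_pt_lim f x l ->
  derivable (f : R^o -> R^o) x 1 /\ derive1 (f : R^o -> R^o) x = l.
Proof.
move=> /dpl_cvg H; split.
  apply/cvg_ex; exists l => /=.
  apply: cvg_trans H; apply: near_eq_cvg; near=> h. by rewrite [h%:A]mulr1.
by rewrite /derive1; apply: cvg_lim.
Unshelve. all: by end_near.
Qed.

Lemma gfE t : gf t = gauss_fun t.
Proof. by rewrite /gf RexpE RpowE RoppE. Qed.

Lemma RInt_gf (x : R) : 0 < x ->
  RInt gf 0 x = gauss_integral_proof.integral0_gauss x.
Proof.
move=> x0.
pose F := fun y => RInt gf 0 y.
have dF y : derivable (F : R^o -> R^o) y 1 /\ derive1 (F : R^o -> R^o) y = gauss_fun y.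
  by rewrite -gfE; apply: dpl_mc; apply: gf_dpl.
have cF y : {for y, continuous (F : R^o -> R^o)}.
  by apply: differentiable_continuous; apply/derivable1_diffP; exact: (dF y).1.
have H1 : {within `[0, x], continuous gauss_fun}.
  apply: continuous_subspaceT; exact: continuous_gauss_fun.
have H2 : derivable_oo_LRcontinuous (F : R^o -> R^o) 0 x.
  split.
  + by move=> y _; exact: (dF y).1.
  + exact: cvg_at_right_filter (cF 0).
  + exact: cvg_at_left_filter (cF x).
have E := @continuous_FTC2 R gauss_fun F 0 x x0 H1 H2.
rewrite /gauss_integral_proof.integral0_gauss /Rintegral E; last first.
  by move=> y _; exact: (dF y).2.
by rewrite /F /= RInt_point /= subr0.
Qed.

Lemma gf_sq_lim : gf_sq_lim_stmt.
Proof.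
move=> eps /RltP e0.
have := @gauss_integral_proof.cvg_integral0_gauss_sqr R.
move/cvgrPdist_lt => /(_ eps e0) [M [_ HM]].
exists (Num.max M 1); split.
  apply/RltP; rewrite lt_max ltr01 orbT //.
move=> x /RltP; rewrite gt_max => /andP [Mx x1].
have := HM x Mx.
rewrite -RInt_gf ?(lt_trans ltr01) // distrC RabsE RpiE => /RltP.
have -> : (4%coqR : R) = 2 * 2.
  by rewrite -two -RmultE; ring.
by rewrite RpowE -natrM.
Qed.
End Bridge.

Lemma sqrt2PI_pos : 0 < sqrt (2 * PI).
Proof. apply sqrt_lt_R0. generalize PI_RGT_0; lra. Qed.

Lemma phi_pos x : 0 < phi x.
Proof. unfold phi. apply Rdiv_lt_0_compat. apply exp_pos. apply sqrt2PI_pos. Qed.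

Lemma phi_even x : phi (- x) = phi x.
Proof. unfold phi. replace ((-x)^2) with (x^2) by ring. reflexivity. Qed.

Lemma phi_deriv x : is_derive phi x (- x * phi x).
Proof.
unfold phi. auto_derive. { generalize sqrt2PI_pos; lra. }
change R in x. replace (- (x * (x * 1)) * / 2) with (- x ^ 2 / 2) by (unfold Rdiv; ring). field. generalize sqrt2PI_pos; lra.
Qed.

Lemma phi_cont x : continuous phi x.
Proof. apply (ex_derive_continuous phi). eexists. apply phi_deriv. Qed.

Lemma phi_exRInt a b : ex_RInt phi a b.
Proof. apply (ex_RInt_continuous phi). intros; apply phi_cont. Qed.

Lemma Phi_deriv x : is_derive Phi x (phi x).
Proof.
unfold Phi.
replace (phi x) with (0 + phi x) by ring.
apply (@is_derive_plus R_AbsRing R_NormedModule (fun _ => /2) (fun y => RInt phi 0 y)).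
apply (@is_derive_const R_AbsRing R_NormedModule).
apply (is_derive_RInt phi (fun y => RInt phi 0 y) 0).
- apply filter_forall. intros b. apply (RInt_correct phi), phi_exRInt.
- apply phi_cont.
Qed.

Lemma Phi_cont x : continuity_pt Phi x.
Proof.
apply continuity_pt_filterlim. apply (ex_derive_continuous Phi). eexists; apply Phi_deriv.
Qed.

Lemma Phi_lt x y : x < y -> Phi x < Phi y.
Proof.
intros H. apply (incr_function Phi m_infty p_infty phi); try easy.
- intros z _ _. apply Phi_deriv.
- intros z _ _. apply phi_pos.
Qed.

Lemma Phi_le x y : x <= y -> Phi x <= Phi y.
Proof.
intros [H|H]. left; now apply Phi_lt. right; now subst.
Qed.

Lemma Phi_le_inv x y : Phi x <= Phi y -> x <= y.
Proof.
intros H. destruct (Rle_lt_dec x y) as [h|h]; auto.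
apply Phi_lt in h. lra.
Qed.

Lemma Phi_sym x : Phi (- x) = 1 - Phi x.
Proof.
unfold Phi.
assert (E : RInt phi 0 (- x) = - RInt phi 0 x).
{ assert (H := RInt_comp_lin phi (-1) 0 0 x (phi_exRInt _ _)).
  replace (-1 * 0 + 0) with 0 in H by ring.
  replace (-1 * x + 0) with (- x) in H by ring.
  rewrite <- H.
  transitivity (opp (RInt phi 0 x)). 2: reflexivity.
  rewrite <- (RInt_opp phi 0 x (phi_exRInt _ _)).
  apply RInt_ext. intros z _. unfold scal, opp; simpl. unfold mult; simpl.
  replace (-1 * z + 0) with (- z) by ring. rewrite phi_even. ring. }
rewrite E. field.
Qed.
Lemma gf_sq_lim : gf_sq_lim_stmt.
Proof. exact Bridge.gf_sq_lim. Qed.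

Lemma sqrt2_pos : 0 < sqrt 2.
Proof. apply sqrt_lt_R0; lra. Qed.
Lemma sqrtPI_pos : 0 < sqrt PI.
Proof. apply sqrt_lt_R0; apply PI_RGT_0. Qed.

Lemma gf_pos t : 0 < gf t.
Proof. apply exp_pos. Qed.

Lemma Phi_gf x : Phi x = /2 + RInt gf 0 (x / sqrt 2) / sqrt PI.
Proof.
unfold Phi. f_equal.
assert (H := RInt_comp_lin gf (/ sqrt 2) 0 0 x (gf_exRInt _ _)).
replace (/ sqrt 2 * 0 + 0) with 0 in H by ring.
replace (/ sqrt 2 * x + 0) with (x / sqrt 2) in H by (unfold Rdiv; ring).
rewrite <- H.
assert (Hs : sqrt (2 * PI) = sqrt 2 * sqrt PI).
{ apply sqrt_mult; generalize PI_RGT_0; lra. }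
assert (Hex : ex_RInt (fun y => scal (/ sqrt 2) (gf (/ sqrt 2 * y + 0))) 0 x).
{ apply (ex_RInt_continuous (fun y => scal (/ sqrt 2) (gf (/ sqrt 2 * y + 0)))).
  intros z _. apply (ex_derive_continuous (fun y => scal (/ sqrt 2) (gf (/ sqrt 2 * y + 0)))).
  unfold gf, scal; simpl; unfold mult; simpl. auto_derive. easy. }
transitivity (RInt (fun y => scal (/ sqrt PI) (scal (/ sqrt 2) (gf (/ sqrt 2 * y + 0)))) 0 x).
- apply RInt_ext. intros z _. unfold scal; simpl; unfold mult; simpl.
  unfold phi, gf. rewrite Hs.
  replace (- (/ sqrt 2 * z + 0) ^ 2) with (- z ^ 2 / 2).
  + field. generalize sqrtPI_pos sqrt2_pos; intros; split; apply Rgt_not_eq; assumption.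
  + replace ((/ sqrt 2 * z + 0) ^ 2) with (z ^ 2 / (sqrt 2 * sqrt 2)) by (field; apply Rgt_not_eq, sqrt2_pos).
    rewrite sqrt_sqrt by lra. field.
- rewrite (RInt_scal _ _ _ _ Hex). unfold scal; simpl; unfold mult; simpl. unfold Rdiv. ring.
Qed.

Definition I (z : R) := RInt gf 0 z.

Lemma I_diff a b : I b - I a = RInt gf a b.
Proof.
unfold I. rewrite <- (RInt_Chasles gf 0 a b) by apply gf_exRInt.
unfold plus; simpl. ring.
Qed.

Lemma RInt_gf_pos a b : a < b -> 0 < RInt gf a b.
Proof.
intros H. apply RInt_gt_0; auto. intros; apply gf_pos. intros; apply (ex_derive_continuous gf). unfold gf; auto_derive; easy.
Qed.

Lemma I_incr a b : a <= b -> I a <= I b.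
Proof.
intros [H|H]. apply RInt_gf_pos in H. rewrite <- I_diff in H. lra. subst; lra.
Qed.

Lemma I_0 : I 0 = 0.
Proof. unfold I. rewrite RInt_point. reflexivity. Qed.

Lemma I_nonneg z : 0 <= z -> 0 <= I z.
Proof. intros H. rewrite <- I_0. now apply I_incr. Qed.

Definition sg := sqrt PI / 2.
Lemma sg_pos : 0 < sg.
Proof. unfold sg. generalize sqrtPI_pos; lra. Qed.
Lemma sg_sq : sg ^ 2 = PI / 4.
Proof. unfold sg. replace ((sqrt PI / 2) ^ 2) with (sqrt PI * sqrt PI / 4) by field.
rewrite sqrt_sqrt. reflexivity. generalize PI_RGT_0; lra. Qed.

Lemma I_le z : 0 <= z -> I z <= sg.
Proof.
intros Hz. destruct (Rle_lt_dec (I z) sg) as [h|h]; auto. exfalso.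
assert (Hs := sg_pos). assert (Hq := sg_sq).
assert (E : 0 < I z ^ 2 - PI / 4) by nra.
destruct (gf_sq_lim _ E) as [M [HM HM']].
set (x := Rmax M z + 1).
assert (Hx : M < x) by (unfold x; generalize (Rmax_l M z); lra).
assert (Hx2 : z <= x) by (unfold x; generalize (Rmax_r M z); lra).
specialize (HM' x Hx). fold (I x) in HM'.
assert (Ix := I_incr _ _ Hx2).
apply Rabs_def2 in HM'. nra.
Qed.

Lemma I_sup eps : 0 < eps -> exists z, 0 <= z /\ sg - eps < I z.
Proof.
intros He. assert (Hs := sg_pos). assert (Hq := sg_sq).
set (e' := Rmin eps sg).
assert (He1 : e' <= eps) by apply Rmin_l.
assert (He2 : e' <= sg) by apply Rmin_r.
assert (He3 : 0 < e') by (unfold e'; apply Rmin_glb_lt; lra).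
destruct (gf_sq_lim (sg * e')) as [M [HM HM']]. nra.
exists (M + 1). split. lra.
specialize (HM' (M+1) ltac:(lra)). fold (I (M+1)) in HM'.
assert (A1 := I_nonneg (M+1) ltac:(lra)).
assert (A2 := I_le (M+1) ltac:(lra)).
apply Rabs_def2 in HM'.
destruct (Rle_lt_dec (I (M+1)) (sg - e')) as [h|h]; [|lra].
exfalso. assert (I (M+1) ^ 2 <= (sg - e') ^ 2) by (apply pow_incr; lra). nra.
Qed.

Lemma Phi_0 : Phi 0 = /2.
Proof. unfold Phi. rewrite RInt_point. simpl. unfold zero; simpl. ring. Qed.

Lemma Phi_le1 x : Phi x <= 1.
Proof.
destruct (Rle_lt_dec 0 x) as [h|h].
- rewrite Phi_gf. fold (I (x / sqrt 2)).
  assert (H : 0 <= x / sqrt 2) by (apply Rdiv_le_0_compat; [lra|apply sqrt2_pos]).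
  assert (H1 := I_le _ H). assert (H2 := sqrtPI_pos).
  unfold sg in H1. apply Rle_trans with (/2 + (sqrt PI / 2) / sqrt PI).
  + apply Rplus_le_compat_l. apply Rmult_le_compat_r. left; now apply Rinv_0_lt_compat. assumption.
  + right; field; lra.
- assert (H := Phi_lt _ _ h). rewrite Phi_0 in H. lra.
Qed.

Lemma Phi_lt1 x : Phi x < 1.
Proof. assert (H := Phi_lt x (x+1) ltac:(lra)). assert (H1 := Phi_le1 (x+1)). lra. Qed.

Lemma Phi_pos x : 0 < Phi x.
Proof. replace x with (- - x) by ring. rewrite Phi_sym. generalize (Phi_lt1 (-x)); lra. Qed.

Lemma Phi_sup eps : 0 < eps -> exists x, 1 - eps < Phi x.
Proof.
intros He. assert (H2 := sqrtPI_pos). assert (H3 := sqrt2_pos).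
destruct (I_sup (eps * sqrt PI)) as [z [Hz Iz]]. nra.
exists (z * sqrt 2). rewrite Phi_gf.
replace (z * sqrt 2 / sqrt 2) with z by (field; lra). fold (I z).
unfold sg in Iz.
apply Rmult_lt_compat_r with (r := / sqrt PI) in Iz. 2: now apply Rinv_0_lt_compat.
replace ((sqrt PI / 2 - eps * sqrt PI) * / sqrt PI) with (/2 - eps) in Iz by (field; lra).
unfold Rdiv. lra.
Qed.

Lemma Phi_inf eps : 0 < eps -> exists x, Phi x < eps.
Proof.
intros He. destruct (Phi_sup eps He) as [x Hx]. exists (- x). rewrite Phi_sym. lra.
Qed.

Lemma Phi_surj p : 0 < p < 1 -> exists x, Phi x = p.
Proof.
intros Hp.
destruct (Phi_inf p ltac:(lra)) as [a Ha].
destruct (Phi_sup (1 - p) ltac:(lra)) as [b Hb].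
assert (Hab : a < b).
{ destruct (Rlt_le_dec a b) as [h|h]; auto. apply Phi_le in h. lra. }
destruct (IVT (fun x => Phi x - p) a b) as [z [Hz1 Hz2]]; auto.
- intros x. apply continuity_pt_minus. apply Phi_cont. apply continuity_pt_const. intros u v; reflexivity.
- lra.
- lra.
- exists z. lra.
Qed.

Lemma Phi_inv_spec p : 0 < p < 1 -> Phi (Phi_inv p) = p.
Proof.
intros Hp. unfold Phi_inv.
apply (epsilon_spec (inhabits 0) (fun x => Phi x = p)).
now apply Phi_surj.
Qed.

Lemma mono_helper f df a b : a <= b ->
  (forall x, is_derive f x (df x)) -> (forall x, a <= x <= b -> 0 <= df x) -> f a <= f b.
Proof.
intros Hab Hd Hp.
destruct (MVT_gen f a b df) as [c [Hc E]].
- intros; apply Hd.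
- intros; apply continuity_pt_filterlim. apply (ex_derive_continuous f). eexists; apply Hd.
- rewrite Rmin_left in Hc by lra. rewrite Rmax_right in Hc by lra.
  assert (0 <= df c * (b - a)) by (apply Rmult_le_pos; [apply Hp; lra|lra]). lra.
Qed.

Lemma ex_derive_Phi z : ex_derive Phi z.
Proof. eexists; apply Phi_deriv. Qed.
Lemma Derive_Phi z : Derive Phi z = phi z.
Proof. apply is_derive_unique, Phi_deriv. Qed.

Lemma exp_le_m x y : x <= y -> exp x <= exp y.
Proof. intros [H|H]. left; now apply exp_increasing. subst; lra. Qed.

Lemma d1_d2 k s : 0 < s -> d1 k s = d2 k s + s.
Proof. intros; unfold d1, d2; field; lra. Qed.

Lemma phi_shift c s : phi (c + s) = phi c * exp (- c * s - s ^ 2 / 2).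
Proof.
unfold phi. unfold Rdiv. rewrite Rmult_assoc, (Rmult_comm (/ _)), <- Rmult_assoc, <- exp_plus.
f_equal. f_equal. field.
Qed.

Lemma maxchar k s y : 0 < s ->
  Phi (y + s) - exp k * Phi y <= Phi (d1 k s) - exp k * Phi (d2 k s).
Proof.
intros Hs. rewrite d1_d2 by auto.
set (m := d2 k s).
set (f := fun y => Phi (y + s) - exp k * Phi y).
set (df := fun y => phi (y + s) - exp k * phi y).
assert (Hd : forall x, is_derive f x (df x)).
{ intros x. unfold f, df. auto_derive.
  - repeat split; apply ex_derive_Phi.
  - change (fun x0 : R => Phi x0) with Phi. rewrite !Derive_Phi. ring. }
assert (Hsign : forall c, phi (c + s) - exp k * phi c = phi c * (exp (- c * s - s ^ 2 / 2) - exp k)).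
{ intros c. rewrite phi_shift. ring. }
assert (Hm : forall c, c <= m -> k <= - c * s - s ^ 2 / 2).
{ intros c Hc. unfold m, d2 in Hc. apply Rmult_le_compat_r with (r := s) in Hc; [|lra].
  replace ((- k / s - s / 2) * s) with (- k - s ^ 2 / 2) in Hc by (field; lra). lra. }
assert (Hm' : forall c, m <= c -> - c * s - s ^ 2 / 2 <= k).
{ intros c Hc. unfold m, d2 in Hc. apply Rmult_le_compat_r with (r := s) in Hc; [|lra].
  replace ((- k / s - s / 2) * s) with (- k - s ^ 2 / 2) in Hc by (field; lra). lra. }
change (f y <= f m).
destruct (Rle_lt_dec y m) as [h|h].
- apply (mono_helper f df y m h Hd). intros c Hc. unfold df. rewrite Hsign.
  apply Rmult_le_pos. left; apply phi_pos.
  assert (exp k <= exp (- c * s - s ^ 2 / 2)) by (apply exp_le_m; apply Hm; lra). lra.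
- set (g := fun y => - f y). set (dg := fun y => - df y).
  assert (Hg : forall x, is_derive g x (dg x)).
  { intros x. unfold g, dg. apply (@is_derive_opp R_AbsRing R_NormedModule). apply Hd. }
  assert (H := mono_helper g dg m y ltac:(lra) Hg). unfold g in H.
  cut (f y <= f m). auto. apply Ropp_le_cancel. apply H.
  intros c Hc. unfold dg, df. rewrite Hsign.
  assert (exp (- c * s - s ^ 2 / 2) <= exp k) by (apply exp_le_m; apply Hm'; lra).
  assert (0 < phi c) by apply phi_pos. nra.
Qed.

Lemma gap_ge k c sigma x y : 0 <= k -> 0 < c -> 0 < sigma -> C_BS k sigma = c ->
  Phi x - exp k * Phi y = c -> sigma <= x - y.
Proof.
intros Hk Hc Hs HC Hxy.
destruct (Rle_lt_dec sigma (x - y)) as [h|h]; auto. exfalso.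
assert (He : 1 <= exp k) by (rewrite <- exp_0; apply exp_le_m; lra).
assert (Hy := Phi_pos y).
destruct (Rle_lt_dec (x - y) 0) as [h2|h2].
- assert (Phi x <= Phi y) by (apply Phi_le; lra). nra.
- set (s := x - y).
  assert (H1 := maxchar k s y h2). replace (y + s) with x in H1 by (unfold s; ring).
  assert (H2 := maxchar k sigma (d2 k s) Hs).
  rewrite d1_d2 in H1 by auto.
  assert (H3 := Phi_lt (d2 k s + s) (d2 k s + sigma) ltac:(unfold s in *; lra)).
  unfold C_BS in HC. lra.
Qed.

Ltac fs := field; repeat split; intro; lra.

Lemma phi_le1 t : phi t <= 1.
Proof.
unfold phi. assert (H1 : exp (- t ^ 2 / 2) <= 1).
{ rewrite <- exp_0. apply exp_le_m. assert (0 <= t^2) by apply pow2_ge_0. lra. }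
assert (H2 : 1 <= sqrt (2 * PI)).
{ rewrite <- sqrt_1. apply sqrt_le_1_alt. generalize PI_RGT_0 PI2_3_2; lra. }
assert (H3 := exp_pos (- t ^ 2 / 2)).
apply Rle_trans with (exp (- t ^ 2 / 2) / 1). 2: lra.
apply Rmult_le_compat_l. lra. apply Rinv_le_contravar; lra.
Qed.

Lemma RInt_phi a b : RInt phi a b = Phi b - Phi a.
Proof.
unfold Phi. assert (H := RInt_Chasles phi 0 a b (phi_exRInt _ _) (phi_exRInt _ _)).
unfold plus in H; simpl in H. rewrite <- H. generalize (RInt phi 0 a) (RInt phi a b). intros p q. change R in p, q. change (@eq R q (/2 + (p+q) - (/2 + p))). ring.
Qed.

Lemma RInt_cphi l a b : RInt (fun t => l * phi t) a b = l * (Phi b - Phi a).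
Proof. rewrite <- RInt_phi. exact (RInt_scal phi a b l (phi_exRInt a b)). Qed.

Lemma tail_lower u : 0 < u -> u * phi u <= (1 + u ^ 2) * (1 - Phi u).
Proof.
intros Hu.
set (R0 := (1 + / u ^ 2) * (1 - Phi u)).
assert (Hb : forall b, u < b -> phi u / u - / b <= R0).
{ intros b Hub.
  set (g := fun t => phi t * (1 + / t ^ 2)).
  assert (Hd : forall t, 0 < t -> is_derive (fun t => - phi t / t) t (g t)).
  { intros t Ht. unfold g, phi. auto_derive.
    - repeat split; intro; lra.
    - replace (- (t * (t * 1)) * / 2) with (- t ^ 2 / 2) by (unfold Rdiv; ring).
      generalize sqrt2PI_pos; intro; field; repeat split; intro; lra. }
  assert (Hc : forall t, 0 < t -> continuous g t).
  { intros t Ht. apply (ex_derive_continuous g). unfold g, phi. auto_derive. apply Rgt_not_eq. nra. }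
  assert (HI : is_RInt g u b (minus (- phi b / b) (- phi u / u))).
  { apply (is_RInt_derive (fun t => - phi t / t) g).
    - intros x Hx. rewrite Rmin_left in Hx by lra. apply Hd. lra.
    - intros x Hx. rewrite Rmin_left in Hx by lra. apply Hc. lra. }
  assert (Hex : ex_RInt g u b) by (eexists; apply HI).
  apply (@is_RInt_unique R_CompleteNormedModule) in HI.
  assert (Hle : RInt g u b <= RInt (fun t => (1 + / u ^ 2) * phi t) u b).
  { apply RInt_le. lra. assumption.
    apply (ex_RInt_scal phi u b (1 + / u ^ 2)), phi_exRInt.
    intros t Ht. unfold g.
    rewrite (Rmult_comm (1 + / u ^ 2)). apply Rmult_le_compat_l. left; apply phi_pos.
    apply Rplus_le_compat_l. apply Rinv_le_contravar. apply pow_lt; lra.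
    apply pow_incr; lra. }
  rewrite RInt_cphi in Hle.
  rewrite HI in Hle.
  unfold scal, minus, plus, opp in Hle; simpl in Hle; unfold mult in Hle; simpl in Hle.
  assert (Hpb := phi_le1 b). assert (Hpb' := phi_pos b).
  assert (Hb1 := Phi_le1 b).
  assert (Hpos : 0 <= 1 + / u ^ 2).
  { assert (0 < / u ^ 2) by (apply Rinv_0_lt_compat, pow_lt; lra). lra. }
  assert (phi b / b <= / b).
  { unfold Rdiv. rewrite <- (Rmult_1_l (/ b)) at 2. apply Rmult_le_compat_r.
    left; apply Rinv_0_lt_compat; lra. assumption. }
  replace (u * (u * 1)) with (u ^ 2) in Hle by ring.
  assert ((1 + / u ^ 2) * (Phi b - Phi u) <= R0).
  { unfold R0. apply Rmult_le_compat_l; lra. }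
  unfold Rdiv in *. lra. }
assert (Hpu := phi_pos u).
assert (Hle : phi u / u <= R0).
{ destruct (Rle_lt_dec (phi u / u) R0) as [h|h]; auto. exfalso.
  set (b := Rmax (u + 1) (2 / (phi u / u - R0))).
  assert (Hb1 : u < b) by (unfold b; generalize (Rmax_l (u+1) (2 / (phi u / u - R0))); lra).
  assert (Hb2 : 2 / (phi u / u - R0) <= b) by (unfold b; apply Rmax_r).
  specialize (Hb b Hb1).
  assert (Hb0 : 0 < b) by lra.
  assert (Hd : 0 < phi u / u - R0) by lra.
  assert (/ b <= (phi u / u - R0) / 2).
  { set (d := phi u / u - R0) in *. clearbody d.
    replace (d / 2) with (/ (2 / d)) by fs.
    apply Rinv_le_contravar. apply Rdiv_lt_0_compat; lra. exact Hb2. }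
  lra. }
unfold R0 in Hle.
apply Rmult_le_compat_l with (r := u ^ 2) in Hle. 2: nra.
replace (u ^ 2 * (phi u / u)) with (u * phi u) in Hle by fs.
replace (u ^ 2 * ((1 + / u ^ 2) * (1 - Phi u))) with ((1 + u ^ 2) * (1 - Phi u)) in Hle by fs.
exact Hle.
Qed.

Lemma ex_derive_phi z : ex_derive phi z.
Proof. eexists; apply phi_deriv. Qed.
Lemma Derive_phi z : Derive phi z = - z * phi z.
Proof. apply is_derive_unique, phi_deriv. Qed.

Definition q u := u * (1 - Phi u) / phi u.

Lemma q_deriv u : is_derive q u (((1 + u ^ 2) * (1 - Phi u) - u * phi u) / phi u).
Proof.
unfold q. assert (Hp := phi_pos u). auto_derive.
- repeat split; try apply ex_derive_Phi; try apply ex_derive_phi. intro; lra.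
- change (fun x0 : R => Phi x0) with Phi. change (fun x0 : R => phi x0) with phi.
  rewrite Derive_Phi, Derive_phi. change R in u. field. lra.
Qed.

Lemma q_mono t s : 0 <= t <= s -> q t <= q s.
Proof.
intros [Ht Hts].
apply (mono_helper q (fun u => ((1 + u ^ 2) * (1 - Phi u) - u * phi u) / phi u)); auto.
- apply q_deriv.
- intros u Hu. apply Rdiv_le_0_compat. 2: apply phi_pos.
  destruct (Req_dec u 0) as [e|e].
  + subst. rewrite Phi_0. lra.
  + assert (H := tail_lower u ltac:(lra)). lra.
Qed.

Definition sk k x := sqrt (x ^ 2 + 2 * k).
Definition G k x := Phi (- sk k x) / Phi x.

Lemma G_deriv k x : 0 < k ->
  is_derive (G k) x ((- phi (sk k x) * (x / sk k x) * Phi x - Phi (- sk k x) * phi x) / (Phi x) ^ 2).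
Proof.
intros Hk. unfold G, sk.
assert (Hp := Phi_pos x). assert (Hx2 : 0 < x ^ 2 + 2 * k) by nra.
assert (Hs : 0 < sqrt (x ^ 2 + 2 * k)) by (apply sqrt_lt_R0; lra).
auto_derive.
- repeat split; try apply ex_derive_Phi; try lra; intro; lra.
- change (fun x0 : R => Phi x0) with Phi.
  rewrite !Derive_Phi, phi_even. change R in x.
  replace (x * (x * 1) + 2 * k) with (x ^ 2 + 2 * k) by ring.
  field. split; apply Rgt_not_eq; assumption.
Qed.

Lemma G_mono_pos k x1 x2 : 0 < k -> x1 <= x2 -> G k x2 <= G k x1.
Proof.
intros Hk H12.
set (dG := fun x => (- phi (sk k x) * (x / sk k x) * Phi x - Phi (- sk k x) * phi x) / (Phi x) ^ 2).
assert (Hd : forall x, is_derive (fun x => - G k x) x (- dG x)).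
{ intros x. apply (@is_derive_opp R_AbsRing R_NormedModule). apply G_deriv; auto. }
assert (H := mono_helper (fun x => - G k x) (fun x => - dG x) x1 x2 H12 Hd).
cut (- G k x1 <= - G k x2). lra. apply H.
intros x _. unfold dG.
assert (Hp := Phi_pos x). assert (Hx2 : 0 < x ^ 2 + 2 * k) by nra.
assert (Hs : 0 < sk k x) by (apply sqrt_lt_R0; lra).
assert (Hsx : sk k x ^ 2 = x ^ 2 + 2 * k) by (unfold sk; rewrite <- Rsqr_pow2; apply Rsqr_sqrt; lra).
assert (Hpx := phi_pos x). assert (Hps := phi_pos (sk k x)).
assert (HPs := Phi_pos (- sk k x)).
assert (num : 0 <= phi (sk k x) * (x / sk k x) * Phi x + Phi (- sk k x) * phi x).
{ destruct (Rle_lt_dec 0 x) as [h|h].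
  - assert (0 <= x / sk k x) by (apply Rdiv_le_0_compat; lra).
    assert (0 <= phi (sk k x) * (x / sk k x) * Phi x).
    { apply Rmult_le_pos. apply Rmult_le_pos; lra. lra. }
    assert (0 <= Phi (- sk k x) * phi x) by (apply Rmult_le_pos; lra). lra.
  - assert (Hts : - x <= sk k x).
    { assert ((- x) ^ 2 <= sk k x ^ 2) by (rewrite Hsx; nra). nra. }
    set (t := - x) in *. set (s := sk k x) in *.
    assert (Ht : 0 < t) by (unfold t; lra).
    assert (Hq := q_mono t s ltac:(lra)). unfold q in Hq.
    replace x with (- t) by (unfold t; ring).
    rewrite phi_even. rewrite !Phi_sym.
    rewrite Phi_sym in HPs. fold s in HPs, Hps.
    assert (Hpt := phi_pos t). 
    replace (phi s * (- t / s) * (1 - Phi t) + (1 - Phi s) * phi t) with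
      (phi t * phi s / s * (s * (1 - Phi s) / phi s - t * (1 - Phi t) / phi t)) by fs.
    apply Rmult_le_pos. apply Rdiv_le_0_compat; [nra|lra]. lra. }
apply Rmult_le_reg_r with (r := Phi x ^ 2). nra.
rewrite Rmult_0_l. 
replace (- ((- phi (sk k x) * (x / sk k x) * Phi x - Phi (- sk k x) * phi x) / Phi x ^ 2) * Phi x ^ 2) with
  (phi (sk k x) * (x / sk k x) * Phi x + Phi (- sk k x) * phi x) by fs.
exact num.
Qed.

Lemma G_prod k x1 x2 : 0 <= k -> x1 <= x2 ->
  Phi (- sk k x2) * Phi x1 <= Phi (- sk k x1) * Phi x2.
Proof.
intros Hk H12.
assert (P1 := Phi_pos x1). assert (P2 := Phi_pos x2).
destruct Hk as [Hk|Hk].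
- assert (H := G_mono_pos k x1 x2 Hk H12). unfold G in H.
  apply Rmult_le_compat_r with (r := Phi x1 * Phi x2) in H. 2: nra.
  replace (Phi (- sk k x2) / Phi x2 * (Phi x1 * Phi x2)) with (Phi (- sk k x2) * Phi x1) in H by fs.
  replace (Phi (- sk k x1) / Phi x1 * (Phi x1 * Phi x2)) with (Phi (- sk k x1) * Phi x2) in H by fs.
  exact H.
- subst k. unfold sk.
  replace (x1 ^ 2 + 2 * 0) with (Rsqr x1) by (unfold Rsqr; ring).
  replace (x2 ^ 2 + 2 * 0) with (Rsqr x2) by (unfold Rsqr; ring).
  rewrite !sqrt_Rsqr_abs.
  assert (Q1 := Phi_pos (- Rabs x1)). assert (Q2 := Phi_pos (- Rabs x2)).
  destruct (Rle_lt_dec 0 x1) as [h1|h1].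
  + rewrite (Rabs_right x1), (Rabs_right x2) by lra.
    assert (Phi (- x2) <= Phi (- x1)) by (apply Phi_le; lra).
    assert (Phi x1 <= Phi x2) by (apply Phi_le; lra).
    apply Rmult_le_compat; try lra; left; apply Phi_pos.
  + rewrite (Rabs_left x1) by lra. rewrite Ropp_involutive.
    destruct (Rle_lt_dec 0 x2) as [h2|h2].
    * rewrite (Rabs_right x2) by lra.
      assert (Phi (- x2) <= Phi x2) by (apply Phi_le; lra). nra.
    * rewrite (Rabs_left x2) by lra. rewrite Ropp_involutive. lra.
Qed.

Lemma d2_neg k y : 0 <= k -> 0 < y -> d2 k y < 0.
Proof. intros Hk Hy. unfold d2. assert (0 <= k / y) by (apply Rdiv_le_0_compat; lra). lra. Qed.

Lemma d2_sk k y : 0 <= k -> 0 < y -> d2 k y = - sk k (d1 k y).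
Proof.
intros Hk Hy. unfold sk.
replace (d1 k y ^ 2 + 2 * k) with (Rsqr (d2 k y)).
- rewrite sqrt_Rsqr_abs. rewrite Rabs_left by (apply d2_neg; auto). ring.
- unfold Rsqr, d1, d2. field. lra.
Qed.

Lemma d1_inv_d1 k y : 0 <= k -> 0 < y -> d1_inv k (d1 k y) = y.
Proof.
intros Hk Hy. unfold d1_inv. fold (sk k (d1 k y)).
rewrite <- (Ropp_involutive (sk k (d1 k y))). rewrite <- d2_sk by auto.
unfold d1, d2. field. lra.
Qed.

Lemma d1_inv_mono k x x' : 0 <= k -> x <= x' -> d1_inv k x <= d1_inv k x'.
Proof.
intros Hk H. unfold d1_inv.
set (s' := sqrt (x' ^ 2 + 2 * k)).
assert (Hs'0 : 0 <= s') by apply sqrt_pos.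
assert (Hs'2 : s' ^ 2 = x' ^ 2 + 2 * k).
{ unfold s'. rewrite <- Rsqr_pow2. apply Rsqr_sqrt. nra. }
assert (Hs'x : - x' <= s') by nra.
assert (sqrt (x ^ 2 + 2 * k) <= s' + (x' - x)).
{ rewrite <- (sqrt_pow2 (s' + (x' - x))) by lra.
  apply sqrt_le_1_alt. nra. }
lra.
Qed.

Lemma d1_mono k a b : 0 <= k -> 0 < a -> a <= b -> d1 k a <= d1 k b.
Proof.
intros Hk Ha Hab. unfold d1.
assert (k / b <= k / a).
{ unfold Rdiv. apply Rmult_le_compat_l. lra. apply Rinv_le_contravar; lra. }
lra.
Qed.

Theorem corollary5p1 (k c sigma : R) :
  0 <= k -> 0 < c < 1 -> 0 < sigma -> C_BS k sigma = c ->
  L_U23 k c <= sigma.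
Proof.
intros Hk Hc Hs HC.
assert (Hek : 1 <= exp k) by (rewrite <- exp_0; apply exp_le_m; lra).
assert (Hek0 : 0 < exp k) by apply exp_pos.
unfold L_U23, U23.
set (D := Rmin ((1 + c) / 2) (c + exp k * Phi (- sqrt (2 * k)))).
assert (HD1 : c < D).
{ unfold D. apply Rmin_glb_lt. lra. assert (0 < exp k * Phi (- sqrt (2 * k))) by (apply Rmult_lt_0_compat; [lra|apply Phi_pos]). lra. }
assert (HD2 : D <= (1 + c) / 2) by (unfold D; apply Rmin_l).
assert (HE1 : 0 < (D - c) / exp k) by (apply Rdiv_lt_0_compat; lra).
assert (HE2 : (D - c) / exp k < 1).
{ apply Rmult_lt_reg_r with (r := exp k). lra. unfold Rdiv. rewrite Rmult_assoc, Rinv_l by lra. lra. }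
assert (Hx := Phi_inv_spec D ltac:(lra)).
assert (Hy := Phi_inv_spec ((D - c) / exp k) ltac:(lra)).
set (x := Phi_inv D) in *. set (y := Phi_inv ((D - c) / exp k)) in *.
assert (Hxy : Phi x - exp k * Phi y = c) by (rewrite Hx, Hy; fs).
assert (HU := gap_ge k c sigma x y Hk ltac:(lra) Hs HC Hxy).
unfold H. fold x y. set (U := x - y) in *.
assert (HU0 : 0 < U) by lra.
assert (Hd1 := d1_mono k sigma U Hk Hs HU).
assert (HG := G_prod k (d1 k sigma) (d1 k U) Hk Hd1).
rewrite <- !d2_sk in HG by lra.
unfold C_D.
assert (HA := Phi_pos (d1 k sigma)). assert (HA1 := Phi_lt1 (d1 k sigma)).
assert (HA' := Phi_pos (d1 k U)).
assert (HB := Phi_pos (d2 k sigma)). assert (HB' := Phi_pos (d2 k U)).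
unfold C_BS in HC |- *.
set (A := Phi (d1 k sigma)) in *. set (A' := Phi (d1 k U)) in *.
set (B := Phi (d2 k sigma)) in *. set (B' := Phi (d2 k U)) in *.
assert (Hkey : A' * c <= (A' - exp k * B') * A).
{ rewrite <- HC. nra. }
assert (HCU : 0 < A' - exp k * B').
{ assert (0 < A' * c) by nra. nra. }
set (p := c / ((A' - exp k * B') / A')).
assert (Hp : p = c * A' / (A' - exp k * B')) by (unfold p; fs).
assert (Hp1 : 0 < p) by (rewrite Hp; apply Rdiv_lt_0_compat; nra).
assert (Hp2 : p <= A).
{ rewrite Hp. apply Rmult_le_reg_r with (r := A' - exp k * B'). lra.
  replace (c * A' / (A' - exp k * B') * (A' - exp k * B')) with (A' * c) by fs. lra. }
assert (Hpi := Phi_inv_spec p ltac:(lra)).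
assert (Hle : Phi_inv p <= d1 k sigma).
{ apply Phi_le_inv. rewrite Hpi. exact Hp2. }
rewrite <- (d1_inv_d1 k sigma Hk Hs).
apply d1_inv_mono; auto.
Qed.
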